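(* Let $\mathcal{A}$ be a separating union-closed family with base set $[n]$ and height $h=4$, and suppose $|\mathcal{B}(\mathcal{A})|=4$. Then $|B|=n$, where $B=b(\mathcal{A}_{<n/2})$.
   Context: A family of sets $\mathcal{A}$ is union-closed if it is a finite family of distinct finite sets with at least one nonempty member set, and $X,Y\in\mathcal{A}$ implies $X\cup Y\in\mathcal{A}$ (the empty set may be a member). For a family $\mathcal{F}$, $b(\mathcal{F})=\bigcup_{F\in\mathcal{F}}F$; the base set $b(\mathcal{A})$ is denoted $[n]=\{1,\dots,n\}$. $\mathcal{A}$ is separating if for any two distinct $x,y\in[n]$ there is $A\in\mathcal{A}$ containing exactly one of $x,y$. A chain in $\mathcal{A}$ is a subfamily any two distinct members of which are comparable under proper inclusion; the height $h$ of $\mathcal{A}$ is the maximum size of a chain in $\mathcal{A}$. For real $x\ge 0$, $\mathcal{A}_{<x}=\{A\in\mathcal{A} : |A|<x\}$. For $\mathcal{S}\subseteq\mathcal{A}$ and $S\in\mathcal{S}$, $\mathrm{irr}_{\mathcal{S}}(S)=\{s\in S : s\notin b(\mathcal{S}\setminus\{S\})\}$, and $\mathcal{S}$ is irredundant if $\mathrm{irr}_{\mathcal{S}}(S)\neq\emptyset$ for every $S\in\mathcal{S}$. With $B=b(\mathcal{A}_{<n/2})$, $\mathcal{B}(\mathcal{A})$ denotes any irredundant subfamily of $\mathcal{A}_{<n/2}$ of minimum size such that $b(\mathcal{B}(\mathcal{A}))=B$. *)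

(* Defs.v *)
From mathcomp Require Import all_boot.
Set Implicit Arguments. Unset Strict Implicit. Unset Printing Implicit Defensive.

Section Defs.
Variable n : nat.
Local Notation fam := {set {set 'I_n}}.

Definition bunion (F : fam) : {set 'I_n} := \bigcup_(X in F) X.

Definition union_closed (A : fam) : Prop :=
  (exists2 X, X \in A & X != set0) /\
  (forall X Y, X \in A -> Y \in A -> X :|: Y \in A).

Definition separating (A : fam) : Prop :=
  forall x y : 'I_n, x != y ->
    exists2 X, X \in A & (x \in X) != (y \in X).

Definition chain (C : fam) : bool :=
  [forall X in C, forall Y in C, (X != Y) ==> ((X \proper Y) || (Y \proper X))].

Definition height (A : fam) : nat :=
  \max_(C : fam | chain C && (C \subset A)) #|C|.

(* A_{<x} for x = n/2 : members X with |X| < n/2, i.e. 2|X| < n *)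
Definition small_half (A : fam) : fam := [set X in A | (#|X|).*2 < n].

Definition irr (S : fam) (X : {set 'I_n}) : {set 'I_n} :=
  X :\: bunion (S :\ X).

Definition irredundant (S : fam) : Prop :=
  forall X, X \in S -> irr S X != set0.

Definition is_BA (A S : fam) : Prop :=
  [/\ S \subset small_half A, irredundant S,
      bunion S = bunion (small_half A) &
      forall S' : fam, S' \subset small_half A -> irredundant S' ->
        bunion S' = bunion (small_half A) -> #|S| <= #|S'| ].

End Defs.

(* Main.v *)
Require Import Defs.
From mathcomp Require Import all_boot.
Set Implicit Arguments. Unset Strict Implicit.

Lemma sorted_chain (T : finType) (s : seq {set T}) :
  sorted (fun X Y : {set T} => X \proper Y) s ->
  {in s &, forall X Y : {set T}, X != Y -> (X \proper Y) || (Y \proper X)}.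
Proof.
elim: s => [|a s IH] //= Hp X Y.
have tr : transitive (fun X Y : {set T} => X \proper Y).
  by move=> b c d; apply: proper_trans.
have /allP Ha := order_path_min tr Hp.
have Hs := path_sorted Hp.
rewrite !inE => /orP[/eqP->|HX] /orP[/eqP->|HY].
- by rewrite eqxx.
- by rewrite Ha.
- by rewrite Ha ?orbT.
- exact: IH.
Qed.

Lemma sorted_uniq_proper (T : finType) (s : seq {set T}) :
  sorted (fun X Y : {set T} => X \proper Y) s -> uniq s.
Proof.
elim: s => [|a s IH] //= Hp.
have tr : transitive (fun X Y : {set T} => X \proper Y).
  by move=> b c d; apply: proper_trans.
have /allP Ha := order_path_min tr Hp.
rewrite IH ?(path_sorted Hp) // andbT.
by apply/negP => /Ha; rewrite properxx.
Qed.

Lemma proper_wit (T : finType) (X Y : {set T}) x :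
  X \subset Y -> x \in Y -> x \notin X -> X \proper Y.
Proof.
move=> sXY xY xX; rewrite properE sXY /=.
by apply/subsetPn; exists x.
Qed.

Lemma bunion_in n (A : {set {set 'I_n}}) :
  union_closed A -> bunion A \in A.
Proof.
move=> [[X0 X0A _] cl].
have -> : bunion A = X0 :|: bunion A.
  by apply/esym/setUidPr; rewrite /bunion; apply: (bigcup_sup X0).
rewrite /bunion.
apply: (big_rec (fun x => X0 :|: x \in A)); first by rewrite setU0.
move=> i x iA H.
by rewrite setUCA; apply: cl.
Qed.

Lemma irr_notin n (S : {set {set 'I_n}}) X Y x :
  Y \in S -> Y != X -> x \in irr S X -> x \notin Y.
Proof.
move=> YS YX; rewrite /irr inE => /andP[H _]; apply: contra H => xY.
apply/bigcupP; exists Y => //; by rewrite !inE YX.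
Qed.

Theorem propositionJ (n : nat) (A : {set {set 'I_n}}) :
  union_closed A ->
  separating A ->
  bunion A = [set: 'I_n] ->
  height A = 4 ->
  (exists S, is_BA A S /\ #|S| = 4) ->
  #|bunion (small_half A)| = n.
Proof.
move=> uc _ bA hA [S [[sub irrS bu _] c4]].
suff -> : bunion (small_half A) = setT by rewrite cardsT card_ord.
apply/eqP; apply/negPn/negP => Hne.
have TA : [set: 'I_n] \in A by rewrite -bA bunion_in.
have inA X : X \in S -> X \in A.
  by move=> /(subsetP sub); rewrite inE => /andP[].
have := enum_uniq (mem S).
have memS X : (X \in S) = (X \in enum S) by rewrite mem_enum.
have sz : size (enum S) = 4 by rewrite -cardE.
move: memS bu.
rewrite /bunion -big_enum /=.
case: (enum S) sz => [|X1 [|X2 [|X3 [|X4 [|]]]]] // _ memS.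
rewrite !big_cons big_nil setU0 => bu.
rewrite /= !inE !negb_or !andbT => /and3P[/and3P[n12 n13 n14] /andP[n23 n24] n34].
have S1 : X1 \in S by rewrite memS !inE eqxx.
have S2 : X2 \in S by rewrite memS !inE eqxx !orbT.
have S3 : X3 \in S by rewrite memS !inE eqxx !orbT.
have S4 : X4 \in S by rewrite memS !inE eqxx !orbT.
have [x1 Hx1] := set0Pn _ (irrS _ S1).
have [x2 Hx2] := set0Pn _ (irrS _ S2).
have [x3 Hx3] := set0Pn _ (irrS _ S3).
have inX X x : x \in irr S X -> x \in X by rewrite /irr inE => /andP[].
have p1 : X4 \proper X3 :|: X4.
  apply: (proper_wit (x := x3)); first exact: subsetUr.
    by rewrite inE (inX _ _ Hx3).
  by apply: (irr_notin S4) Hx3; rewrite eq_sym.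
have p2 : X3 :|: X4 \proper X2 :|: (X3 :|: X4).
  apply: (proper_wit (x := x2)); first exact: subsetUr.
    by rewrite inE (inX _ _ Hx2).
  rewrite inE negb_or; apply/andP; split.
    by apply: (irr_notin S3) Hx2; rewrite eq_sym.
  by apply: (irr_notin S4) Hx2; rewrite eq_sym.
have p3 : X2 :|: (X3 :|: X4) \proper X1 :|: (X2 :|: (X3 :|: X4)).
  apply: (proper_wit (x := x1)); first exact: subsetUr.
    by rewrite inE (inX _ _ Hx1).
  rewrite !inE !negb_or; apply/and3P; split.
  - by apply: (irr_notin S2) Hx1; rewrite eq_sym.
  - by apply: (irr_notin S3) Hx1; rewrite eq_sym.
  - by apply: (irr_notin S4) Hx1; rewrite eq_sym.
have p4 : X1 :|: (X2 :|: (X3 :|: X4)) \proper [set: 'I_n].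
  by rewrite properT bu.
set s := [:: X4; X3 :|: X4; X2 :|: (X3 :|: X4); X1 :|: (X2 :|: (X3 :|: X4)); [set: 'I_n]].
have srt : sorted (fun X Y : {set 'I_n} => X \proper Y) s by rewrite /= p1 p2 p3 p4.
have sA : [set X in s] \subset A.
  apply/subsetP => X; rewrite !inE => /orP[/eqP->|/orP[/eqP->|/orP[/eqP->|/orP[/eqP->|/eqP->]]]] //.
  - exact: inA.
  - by apply: uc.2; apply: inA.
  - by apply: uc.2; [apply: inA | apply: uc.2; apply: inA].
  - by apply: uc.2; [apply: inA | apply: uc.2; [apply: inA | apply: uc.2; apply: inA]].
have ch : chain [set X in s].
  apply/forallP => X; apply/implyP => HX; apply/forallP => Y; apply/implyP => HY.
  apply/implyP; rewrite in_set in HX; rewrite in_set in HY; exact: (sorted_chain srt HX HY).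
have := @leq_bigmax_cond _ (fun C : {set {set 'I_n}} => chain C && (C \subset A)) (fun C : {set {set 'I_n}} => #|C|) [set X in s] (introT andP (conj ch sA)).
rewrite -/(height A) hA cardsE.
by move/card_uniqP: (sorted_uniq_proper srt) => ->.
Qed.
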